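(* Let $p$ be a state whose ratios $p_i/g_i$ ($i=0,\dots,d-1$) are pairwise distinct. If $T$ is an extreme point of $TP(d)$ that is not biplanar, then $Tp$ is not an extreme point of $p^{TP}=\{Sp:S\in TP(d)\}$.
   Context: Fix $d\ge 2$, $\beta\in(0,\infty)$ and pairwise distinct reals $E_0=0,E_1,\dots,E_{d-1}$. Put $q_{m,n}=e^{-\beta(E_m-E_n)}$, $Z=\sum_j q_{j,0}$, $g_i=q_{i,0}/Z$. A state is a probability vector in $\mathbb{R}^d$. $TP(d)$ is the set of $d\times d$ real matrices with non-negative entries, columns summing to $1$, and $Tg=g$. For $T\in TP(d)$, $G(T)$ is the bipartite graph with left vertices $L_0,\dots,L_{d-1}$ (columns), right vertices $R_0,\dots,R_{d-1}$ (rows), and an edge $\{L_j,R_i\}$ iff $T_{ij}>0$. Given orderings $\lambda,\mu$ (permutations of $\{0,\dots,d-1\}$), place $L_{\lambda_a}$ at height $a$ on one vertical line and $R_{\mu_b}$ at height $b$ on a parallel line, edges drawn straight; the drawing is plain if there are no two edges $\{L_{\lambda_a},R_{\mu_b}\}$, $\{L_{\lambda_{a'}},R_{\mu_{b'}}\}$ with $a<a'$ and $b>b'$. An extreme point $T$ of $TP(d)$ is biplanar if some pair $(\lambda,\mu)$ gives a plain drawing of $G(T)$. *)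

(* Defs.v *)
From HB Require Import structures.
From mathcomp Require Import all_boot all_order all_algebra all_fingroup.
From mathcomp Require Import reals sequences exp.
Set Implicit Arguments. Unset Strict Implicit. Unset Printing Implicit Defensive.
Import Order.TTheory GRing.Theory Num.Theory.
Local Open Scope ring_scope.

Section Defs.
Variable R : realType.

Definition qfac (d : nat) (beta : R) (E : 'I_d -> R) (m n : 'I_d) : R :=
  expR (- beta * (E m - E n)).

(* the Gibbs state g_i = q_{i,0} / Z, Z = sum_j q_{j,0}; index 0 is any i with
   val i = 0 (d >= 2 is assumed in the theorem, so this is well defined) *)
Definition gibbs (d : nat) (beta : R) (E : 'I_d -> R) (i0 : 'I_d) : 'cV[R]_d :=
  \col_i (qfac beta E i i0 / \sum_j qfac beta E j i0).

Definition is_state (d : nat) (p : 'cV[R]_d) : Prop :=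
  (forall i, 0 <= p i 0) /\ \sum_i p i 0 = 1.

Definition TP (d : nat) (g : 'cV[R]_d) (T : 'M[R]_d) : Prop :=
  [/\ forall i j, 0 <= T i j,
      forall j, \sum_i T i j = 1
    & T *m g = g].

Definition extreme_point (V : lmodType R) (A : V -> Prop) (x : V) : Prop :=
  A x /\
  forall (y z : V) (t : R), A y -> A z -> 0 < t -> t < 1 ->
    x = t *: y + (1 - t) *: z -> y = x /\ z = x.

(* plain drawing of G(T) for orderings lam (left/columns) and mu (right/rows):
   L_{lam a} is at height a, R_{mu b} at height b; edge {L_j, R_i} iff T i j > 0 *)
Definition plain_drawing (d : nat) (T : 'M[R]_d) (lam mu : 'S_d) : Prop :=
  forall a a' b b' : 'I_d, (a < a')%N -> (b' < b)%N ->
    ~ (0 < T (mu b) (lam a) /\ 0 < T (mu b') (lam a')).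

Definition biplanar (d : nat) (g : 'cV[R]_d) (T : 'M[R]_d) : Prop :=
  extreme_point (TP g) T /\ exists lam mu : 'S_d, plain_drawing T lam mu.

Definition TP_orbit (d : nat) (g p : 'cV[R]_d) (v : 'cV[R]_d) : Prop :=
  exists S : 'M[R]_d, TP g S /\ v = S *m p.

End Defs.

(* Main.v *)
Require Import Defs.
From HB Require Import structures.
From mathcomp Require Import all_boot all_order all_algebra all_fingroup.
From mathcomp Require Import reals sequences exp.
From mathcomp Require Import ring lra zify.
Import Order.TTheory GRing.Theory Num.Theory.
Local Open Scope ring_scope.

Section Ex.
Variable R : realType.
Variable d : nat.
Variable g p : 'cV[R]_d.
Hypothesis gpos : forall j, 0 < g j 0.
Let r (j : 'I_d) := p j 0 / g j 0.

Lemma sum_delta (j : 'I_d) (F : 'I_d -> R) : \sum_l ((l == j)%:R * F l) = F j.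
Proof.
rewrite (bigD1 j) //= eqxx mul1r big1 ?addr0 // => l /negbTE ->; by rewrite mul0r.
Qed.

Lemma exchange (T : 'M[R]_d) (HT : TP g T) (i i' j j' : 'I_d) :
  i != i' -> j != j' -> 0 < T i j -> 0 < T i' j' ->
  exists e, 0 < e /\ exists S, TP g S /\ forall k,
    (S *m p) k 0 = (T *m p) k 0 + e * (r j' - r j) * ((k == i)%:R - (k == i')%:R).
Proof.
move=> ii jj h1 h2; case: HT => Tge0 Tsum Tg.
set e := Num.min (T i j * g j 0) (T i' j' * g j' 0).
have e1 : e <= T i j * g j 0 by rewrite /e ge_min lexx.
have e2 : e <= T i' j' * g j' 0 by rewrite /e ge_min lexx orbT.
have e0 : 0 < e by rewrite /e lt_min !mulr_gt0 ?gpos.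
pose a (k : 'I_d) : R := (k == i)%:R - (k == i')%:R.
pose b (l : 'I_d) : R := (l == j')%:R * (g j' 0)^-1 - (l == j)%:R * (g j 0)^-1.
pose S := T + \matrix_(k, l) (e * a k * b l).
have suma : \sum_k a k = 0.
  rewrite sumrB; have := sum_delta i (fun _ => 1); have := sum_delta i' (fun _ => 1).
  under eq_bigr do rewrite mulr1. move=> ->. under eq_bigr do rewrite mulr1. by move=> ->; rewrite subrr.
have Sp k : (S *m p) k 0 = (T *m p) k 0 + e * (r j' - r j) * a k.
  rewrite mulmxDl mxE; congr (_ + _); rewrite mxE.
  under eq_bigr do rewrite mxE.
  have hb : \sum_l b l * p l 0 = r j' - r j.
    rewrite /b; under eq_bigr do rewrite mulrBl -!mulrA.
    by rewrite sumrB !sum_delta /r !(mulrC (p _ 0)).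
  transitivity (e * a k * \sum_l b l * p l 0).
    by rewrite mulr_sumr; apply: eq_bigr => l _; rewrite mulrA.
  rewrite hb; ring.
exists e; split => //; exists S; split; last by move=> k; rewrite Sp.
split.
- move=> k l; rewrite /S !mxE /a /b.
  have gj := gpos j; have gj' := gpos j'.
  have hx : e * (g j 0)^-1 <= T i j by rewrite ler_pdivrMr.
  have hy : e * (g j' 0)^-1 <= T i' j' by rewrite ler_pdivrMr.
  have px : 0 <= e * (g j 0)^-1 by rewrite mulr_ge0 ?invr_ge0 ?ltW.
  have py : 0 <= e * (g j' 0)^-1 by rewrite mulr_ge0 ?invr_ge0 ?ltW.
  have t0 := Tge0 k l.
  have hx' : k == i -> l == j -> e * (g j 0)^-1 <= T k l by move=> /eqP -> /eqP ->.
  have hy' : k == i' -> l == j' -> e * (g j' 0)^-1 <= T k l by move=> /eqP -> /eqP ->.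
  have nii : k == i -> k == i' -> False by move=> /eqP -> /eqP E; rewrite E eqxx in ii.
  have njj : l == j -> l == j' -> False by move=> /eqP -> /eqP E; rewrite E eqxx in jj.
  case ki: (k == i); case ki': (k == i'); case lj: (l == j); case lj': (l == j');
  rewrite ?ki ?lj ?ki' ?lj' in hx' hy' nii njj;
  try (by case: nii); try (by case: njj);
  try (have hX := hx' erefl erefl); try (have hY := hy' erefl erefl);
  rewrite ?(subr0, sub0r, mul0r, mul1r, mulr1, mulr0, mulrN, mulNr, opprK, subrr, addr0, add0r) //;
  try lra.
- move=> l; rewrite /S; under eq_bigr do rewrite !mxE.
  by rewrite big_split /= Tsum -mulr_suml -mulr_sumr suma mulr0 mul0r addr0.
- rewrite /S mulmxDl Tg; apply/matrixP => k l; rewrite !mxE ord1.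
  under eq_bigr do rewrite mxE.
  have hb : \sum_l b l * g l 0 = 0.
    rewrite /b; under eq_bigr do rewrite mulrBl -!mulrA.
    by rewrite sumrB !sum_delta !mulVf ?gt_eqF ?gpos // subrr.
  transitivity (g k 0 + e * a k * \sum_l b l * g l 0).
    by congr (_ + _); rewrite mulr_sumr; apply: eq_bigr => l' _; rewrite mulrA.
  by rewrite hb mulr0 addr0.
Qed.

Arguments exchange [T] HT [i i' j j'].

Lemma not_ext (T S1 S2 : 'M[R]_d) (k1 k2 : R) (w : 'I_d -> R) (i : 'I_d) :
  TP g S1 -> TP g S2 -> w i = 1 ->
  (forall k, (S1 *m p) k 0 = (T *m p) k 0 + k1 * w k) ->
  (forall k, (S2 *m p) k 0 = (T *m p) k 0 + k2 * w k) ->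
  k1 * k2 < 0 -> ~ extreme_point (TP_orbit g p) (T *m p).
Proof.
move=> HS1 HS2 wi H1 H2 hk [_ Hext].
have k1n : k1 != 0 by apply/eqP => E; rewrite E mul0r ltxx in hk.
have sn : k2 - k1 != 0.
  apply/eqP => E; have E' : k2 = k1 by lra.
  rewrite E' in hk; nra.
set t := k2 / (k2 - k1).
have ht : t * (k2 - k1) = k2 by rewrite /t mulfVK.
have t0 : 0 < t by nra.
have t1 : t < 1 by nra.
have hz : t * k1 + (1 - t) * k2 = 0 by nra.
have heq : T *m p = t *: (S1 *m p) + (1 - t) *: (S2 *m p).
  apply/matrixP => k l; rewrite ord1 !mxE; move: (H1 k) (H2 k); rewrite !mxE => -> ->.
  set X := \sum_j _.
  transitivity (X + (t * k1 + (1 - t) * k2) * w k); first by rewrite hz mul0r addr0.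
  ring.
have [E1 _] := Hext (S1 *m p) (S2 *m p) t (ex_intro _ S1 (conj HS1 erefl))
   (ex_intro _ S2 (conj HS2 erefl)) t0 t1 heq.
have := H1 i; rewrite E1 wi mulr1 => E.
have : k1 == 0 by apply/eqP; lra.
by rewrite (negbTE k1n).
Qed.

Arguments not_ext [T S1 S2 k1 k2 w i].

Lemma noA (T : 'M[R]_d) : TP g T -> extreme_point (TP_orbit g p) (T *m p) ->
  forall i i' j1 j2 j3, i != i' -> r j1 < r j2 -> r j2 < r j3 ->
  0 < T i j1 -> 0 < T i j3 -> 0 < T i' j2 -> False.
Proof.
move=> HT Hx i i' j1 j2 j3 ii r12 r23 h1 h3 h2.
have j12 : j1 != j2 by apply/eqP => E; rewrite E ltxx in r12.
have j32 : j3 != j2 by apply/eqP => E; rewrite E ltxx in r23.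
have [e1 [e10 [S1 [HS1 H1]]]] := exchange HT ii j12 h1 h2.
have [e2 [e20 [S2 [HS2 H2]]]] := exchange HT ii j32 h3 h2.
apply: (not_ext HS1 HS2 (i := i) _ H1 H2 _ Hx).
  by rewrite eqxx (negbTE ii) subr0.
have a : 0 < e1 * (r j2 - r j1) by rewrite mulr_gt0 // subr_gt0.
have b : 0 < e2 * (r j3 - r j2) by rewrite mulr_gt0 // subr_gt0.
nra.
Qed.

Lemma noB (T : 'M[R]_d) : TP g T -> extreme_point (TP_orbit g p) (T *m p) ->
  forall j i i' ja jb, i != i' -> 0 < T i j -> 0 < T i' j -> 0 < T i ja ->
  0 < T i' jb -> 0 < (r ja - r j) * (r jb - r j) -> False.
Proof.
move=> HT Hx j i i' ja jb ii h1 h2 h3 h4 hp.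
have jja : j != ja by apply/eqP => E; rewrite E subrr mul0r ltxx in hp.
have jjb : j != jb by apply/eqP => E; rewrite E subrr mulr0 ltxx in hp.
have i'i : i' != i by rewrite eq_sym.
have [e1 [e10 [S1 [HS1 H1]]]] := exchange HT ii jjb h1 h4.
have [e2 [e20 [S2 [HS2 H2]]]] := exchange HT i'i jja h2 h3.
apply: (not_ext HS1 HS2 (i := i) (k2 := - (e2 * (r ja - r j))) _ H1 _ _ Hx).
- by rewrite eqxx (negbTE ii) subr0.
- by move=> k; rewrite H2; ring.
have : 0 < e1 * e2 by rewrite mulr_gt0.
nra.
Qed.
End Ex.
Set Implicit Arguments. Unset Strict Implicit. Unset Printing Implicit Defensive.


Section Rank.
Variable d : nat.
Variable lt : rel 'I_d.
Hypothesis ltI : irreflexive lt.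
Hypothesis ltT : transitive lt.
Hypothesis ltTot : forall x y, x != y -> lt x y || lt y x.

Definition rnk j := #|[set k | lt k j]|.

Lemma rnk_lt i j : lt i j -> (rnk i < rnk j)%N.
Proof.
move=> hij; apply: proper_card; apply/properP; split.
  by apply/subsetP => k; rewrite !inE => hk; apply: ltT hij.
by exists i; rewrite !inE ?hij ?ltI.
Qed.

Lemma rnk_ltE i j : (rnk i < rnk j)%N = lt i j.
Proof.
apply/idP/idP; last exact: rnk_lt.
move=> h; case: (eqVneq i j) => [E|ne]; first by rewrite E ltnn in h.
case/orP: (ltTot ne) => // hji; have := rnk_lt hji; lia.
Qed.

Lemma rnk_bound j : (rnk j < d)%N.
Proof.
have : (rnk j <= #|[set~ j]|)%N.
  by apply: subset_leq_card; apply/subsetP => k; rewrite !inE => hk; apply/eqP => E; rewrite E ltI in hk.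
rewrite cardsC1 card_ord; have := ltn_ord j; lia.
Qed.

Definition rk j : 'I_d := Ordinal (rnk_bound j).

Lemma rk_inj : injective rk.
Proof.
move=> i j /(congr1 val) /= E; apply/eqP; apply/negPn/negP => ne.
by case/orP: (ltTot ne) => /rnk_lt; rewrite E ltnn.
Qed.

Definition sig : 'S_d := perm rk_inj.

Lemma sig_inv a : rnk ((sig^-1)%g a) = a.
Proof. by have := permKV sig a; rewrite {1}/sig permE => /(congr1 val). Qed.

End Rank.

Section Draw.
Variable R : realType.
Variable d : nat.
Variable T : 'M[R]_d.
Variable r : 'I_d -> R.
Hypothesis rinj : injective r.
Hypothesis nA : forall i i' j1 j2 j3, i != i' -> r j1 < r j2 -> r j2 < r j3 ->
  0 < T i j1 -> 0 < T i j3 -> 0 < T i' j2 -> False.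
Hypothesis nB : forall j i i' ja jb, i != i' -> 0 < T i j -> 0 < T i' j -> 0 < T i ja ->
  0 < T i' jb -> 0 < (r ja - r j) * (r jb - r j) -> False.

Definition ltc : rel 'I_d := fun j j' => r j < r j'.
Lemma ltcI : irreflexive ltc. Proof. by move=> j; rewrite /ltc ltxx. Qed.
Lemma ltcT : transitive ltc. Proof. by move=> y x z; rewrite /ltc; apply: lt_trans. Qed.
Lemma ltcTot x y : x != y -> ltc x y || ltc y x.
Proof.
move=> ne; rewrite /ltc; case: (ltgtP (r x) (r y)) => // E.
by move: ne; rewrite (rinj E) eqxx.
Qed.

Let c := rnk ltc.
Lemma cE j j' : (c j < c j')%N = (r j < r j').
Proof. exact: (rnk_ltE ltcI ltcT ltcTot). Qed.
Lemma c_inj j j' : c j = c j' -> j = j'.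
Proof.
move=> E; apply/eqP; apply/negPn/negP => ne.
by case/orP: (ltcTot ne); rewrite /ltc -cE E ltnn.
Qed.
Lemma c_bound j : (c j < d)%N. Proof. exact: rnk_bound ltcI j. Qed.

Let hi i := (\max_(j | (0 < T i j)%R) c j)%N.
Let lo i := (d - \max_(j | (0 < T i j)%R) (d - c j))%N.

Lemma hi_ge i j : 0 < T i j -> (c j <= hi i)%N.
Proof. by move=> h; exact: (@leq_bigmax_cond _ (fun j => 0 < T i j) c j h). Qed.
Lemma lo_le i j : 0 < T i j -> (lo i <= c j)%N.
Proof.
move=> h; have := @leq_bigmax_cond _ (fun j => 0 < T i j) (fun j => d - c j)%N j h; rewrite /lo.
have := c_bound j; lia.
Qed.
Lemma hi_att i j : 0 < T i j -> exists2 jb, 0 < T i jb & hi i = c jb.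
Proof.
move=> h; have [|jb] := @eq_bigmax_cond _ [pred j | 0 < T i j] c.
  by apply/card_gt0P; exists j.
by rewrite inE => hb E; exists jb.
Qed.
Lemma lo_att i j : 0 < T i j -> exists2 ja, 0 < T i ja & lo i = c ja.
Proof.
move=> h; have [|ja] := @eq_bigmax_cond _ [pred j | 0 < T i j] (fun j => d - c j)%N.
  by apply/card_gt0P; exists j.
rewrite inE => ha E; exists ja => //; rewrite /lo.
have -> : (\max_(j | (0 < T i j)%R) (d - c j) = d - c ja)%N by exact: E.
have := c_bound ja; lia.
Qed.

Lemma sep i i' j j' : i != i' -> 0 < T i j -> 0 < T i' j' ->
  (hi i' <= lo i)%N \/ (hi i <= lo i')%N.
Proof.
move=> ii h h'.
have [ja ha Ea] := lo_att h; have [jb hb Eb] := hi_att h.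
have [ja' ha' Ea'] := lo_att h'; have [jb' hb' Eb'] := hi_att h'.
case: (leqP (hi i') (lo i)) => [|H1]; first by left.
case: (leqP (hi i) (lo i')) => [|H2]; first by right.
exfalso.
case: (ltngtP (lo i) (lo i')) => H3.
- apply: (nA ii (j1 := ja) (j2 := ja') (j3 := jb)) => //; rewrite -cE; lia.
- apply: (nA (i := i') (i' := i) _ (j1 := ja') (j2 := ja) (j3 := jb')) => //; 
    [by rewrite eq_sym | |]; rewrite -cE; lia.
- have E : ja = ja' by apply: c_inj; lia.
  subst ja'.
  apply: (nB ii ha ha' hb hb'); apply: mulr_gt0; rewrite subr_gt0 -cE; lia.
Qed.


Definition ltr : rel 'I_d := fun i' i => (lo i' < lo i)%N ||
  (lo i' == lo i) && ((hi i' < hi i)%N || (hi i' == hi i) && (i' < i)%N).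
Lemma ltrI : irreflexive ltr. Proof. move=> i; rewrite /ltr; lia. Qed.
Lemma ltrT : transitive ltr. Proof. move=> y x z; rewrite /ltr; lia. Qed.
Lemma ltrTot x y : x != y -> ltr x y || ltr y x.
Proof. rewrite /ltr => /eqP ne; have : (x : nat) <> y by move=> E; apply: ne; exact: val_inj.
lia. Qed.

Lemma drawing : exists lam mu : 'S_d, plain_drawing T lam mu.
Proof.
exists (sig ltcI ltcT ltcTot)^-1%g, (sig ltrI ltrT ltrTot)^-1%g.
move=> a a' b b' aa bb [h1 h2].
move: h1 h2.
have ca := sig_inv ltcI ltcT ltcTot a; have ca' := sig_inv ltcI ltcT ltcTot a'.
have rb := sig_inv ltrI ltrT ltrTot b; have rb' := sig_inv ltrI ltrT ltrTot b'.
move: ca ca' rb rb'.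
set j := (sig ltcI ltcT ltcTot)^-1%g a; set j' := (sig ltcI ltcT ltcTot)^-1%g a'.
set i := (sig ltrI ltrT ltrTot)^-1%g b; set i' := (sig ltrI ltrT ltrTot)^-1%g b'.
move=> ca ca' rb rb' h1 h2.
have lr : ltr i' i by rewrite -(rnk_ltE ltrI ltrT ltrTot) rb rb'.
have ne : i != i' by apply/eqP => E; rewrite E ltrI in lr.
have := lo_le h1; have := hi_ge h1; have := lo_le h2; have := hi_ge h2.
rewrite -/c in ca ca'.
move: lr; rewrite /ltr.
case: (sep ne h1 h2); lia.
Qed.
End Draw.

Theorem mainTheorem10 (R : realType) (d : nat) (beta : R) (E : 'I_d -> R)
    (i0 : 'I_d) (p : 'cV[R]_d) (T : 'M[R]_d) :
  (1 < d)%N -> 0 < beta -> val i0 = 0%N -> E i0 = 0 -> injective E ->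
  is_state p ->
  injective (fun i : 'I_d => p i 0 / gibbs beta E i0 i 0) ->
  extreme_point (TP (gibbs beta E i0)) T ->
  ~ biplanar (gibbs beta E i0) T ->
  ~ extreme_point (TP_orbit (gibbs beta E i0) p) (T *m p).
Proof.
move=> d1 b0 vi0 Ei0 Einj Hst Hinj Hext Hnb Hx.
set g := gibbs beta E i0 in Hinj Hext Hnb Hx *.
have gpos : forall j, 0 < g j 0.
  move=> j; rewrite /g /gibbs mxE; apply: divr_gt0; first by rewrite /qfac expR_gt0.
  rewrite (bigD1 i0) //=.
  have := @expR_gt0 R (- beta * (E i0 - E i0)).
  have : 0 <= \sum_(k < d | k != i0) qfac beta E k i0.
    by apply: sumr_ge0 => k _; rewrite /qfac ltW ?expR_gt0.
  rewrite /qfac; lra.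
have HT := Hext.1.
apply: Hnb; split => //.
exact: (drawing Hinj (@noA _ _ g p gpos T HT Hx) (@noB _ _ g p gpos T HT Hx)).
Qed.
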